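(* There is a unique positive smooth function $\psi$ on $\mathbb{R}$ solving the Cauchy problem $L_0(\psi)=0$, $\psi(0)=1$, $\psi'(0)=0$. Moreover: (1) $\psi(-v)=\psi(v)>0$ for all $v\in\mathbb{R}$; (2) there exist a constant $v_0>0$ large enough and a unique function $R\in L^\infty([v_0,+\infty[)$ with $R(v)=O(|v|^{-2})$ such that $$\psi(v)=c|v|^{\gamma+1}\big(1+R(v)\big)\qquad\text{for all }|v|\geqslant v_0,$$ where $c$ is a positive constant.
   Context: Fix $\gamma>1/2$. Let $\tilde W(v)=\frac{\gamma(\gamma+1)}{1+v^2}$ for $v\in\mathbb{R}$ and let $L_0$ be the differential operator $L_0(\psi)=-\psi''+\tilde W\psi$ on $\mathbb{R}$. *)

(* Defs.v *)
From Stdlib Require Import Reals.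
From Coquelicot Require Import Coquelicot.
Open Scope R_scope.

Definition Wt (gamma v : R) : R := gamma * (gamma + 1) / (1 + v ^ 2).

Definition smooth (f : R -> R) : Prop := forall (n : nat) (x : R), ex_derive_n f n x.

Definition L0 (gamma : R) (psi : R -> R) (v : R) : R :=
  - Derive_n psi 2 v + Wt gamma v * psi v.

Definition cauchy_sol (gamma : R) (psi : R -> R) : Prop :=
  (forall v, L0 gamma psi v = 0) /\ psi 0 = 1 /\ Derive psi 0 = 0.

Definition remainder_ok (gamma : R) (psi : R -> R) (c v0 : R) (Rm : R -> R) : Prop :=
  (exists B, forall v, v0 <= Rabs v -> Rabs (Rm v) <= B) /\
  (exists K M, forall v, M <= Rabs v -> Rabs (Rm v) <= K * / (Rabs v ^ 2)) /\
  (forall v, v0 <= Rabs v -> psi v = c * Rpower (Rabs v) (gamma + 1) * (1 + Rm v)).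

(* Main.v *)
Require Import Defs.
From Stdlib Require Import Reals Lra Lia Psatz Factorial.
From Coquelicot Require Import Coquelicot.
Open Scope R_scope.

Lemma deriv_cont (f df : R -> R) x : is_derive f x (df x) -> continuity_pt f x.
Proof.
  intros H. apply continuity_pt_filterlim. apply (ex_derive_continuous (V:=R_NormedModule) f x). eexists; eauto.
Qed.

Lemma mono (f df : R -> R) x y : x <= y ->
  (forall t, x <= t <= y -> is_derive f t (df t)) ->
  (forall t, x <= t <= y -> 0 <= df t) -> f x <= f y.
Proof.
  intros Hxy Hd Hp.
  destruct (MVT_gen f x y df) as [c [Hc Heq]].
  - intros t Ht. rewrite Rmin_left in Ht by lra. rewrite Rmax_right in Ht by lra.
    apply Hd; lra.
  - intros t Ht. rewrite Rmin_left in Ht by lra. rewrite Rmax_right in Ht by lra.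
    apply (deriv_cont f df). apply Hd; lra.
  - rewrite Rmin_left in Hc by lra. rewrite Rmax_right in Hc by lra.
    assert (0 <= df c * (y - x)) by (apply Rmult_le_pos; [apply Hp; lra| lra]). lra.
Qed.

Lemma convex0 (h h1 h2 : R -> R) :
  (forall t, is_derive h t (h1 t)) -> (forall t, is_derive h1 t (h2 t)) ->
  (forall t, 0 <= h2 t) -> h 0 = 0 -> h1 0 = 0 ->
  forall x, (0 <= x -> 0 <= h1 x) /\ (x <= 0 -> h1 x <= 0) /\ 0 <= h x.
Proof.
  intros D1 D2 P H0 H10.
  assert (A : forall x, 0 <= x -> 0 <= h1 x).
  { intros x Hx. rewrite <- H10. apply (mono h1 h2); auto. }
  assert (B : forall x, x <= 0 -> h1 x <= 0).
  { intros x Hx. rewrite <- H10. apply (mono h1 h2); auto. }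
  intros x; split; [|split]; auto.
  destruct (Rle_lt_dec 0 x).
  - rewrite <- H0. apply (mono h h1); auto. intros t Ht; apply A; lra.
  - assert (- h x <= - h 0).
    { apply (mono (fun t => - h t) (fun t => - h1 t)). lra.
      intros t _. apply (is_derive_opp h). auto.
      intros t Ht. assert (h1 t <= 0) by (apply B; lra). lra. }
    lra.
Qed.


Definition I1 (h : R -> R) (t : R) : R := RInt h 0 t.

Lemma I1_derive (h : R -> R) : (forall x, continuous h x) ->
  forall t, is_derive (I1 h) t (h t).
Proof.
  intros Hc t. apply (is_derive_RInt h (I1 h) 0 t).
  - apply filter_forall. intros b. unfold I1. apply (RInt_correct (V:=R_CompleteNormedModule)). apply (ex_RInt_continuous (V:=R_CompleteNormedModule)).
    intros; apply Hc.
  - apply Hc.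
Qed.

Lemma I1_0 h : I1 h 0 = 0.
Proof. unfold I1. rewrite RInt_point. reflexivity. Qed.

Lemma cont_of_derive (f df : R -> R) : (forall x, is_derive f x (df x)) -> forall x, continuous f x.
Proof. intros H x. apply (ex_derive_continuous (V:=R_NormedModule) f x). eexists; eauto. Qed.

Lemma Wt_derive g x : is_derive (Wt g) x (- g * (g+1) * (2 * x) / (1 + x^2)^2).
Proof.
  unfold Wt. auto_derive.
  - nra.
  - field. nra.
Qed.

Lemma Wt_cont g x : continuous (Wt g) x.
Proof. apply (cont_of_derive _ _ (Wt_derive g)). Qed.

Lemma Wt_bounds g x : 0 < g -> 0 <= Wt g x <= g * (g + 1).
Proof.
  intros Hg. unfold Wt. assert (1 <= 1 + x^2) by nra. split.
  - apply Rmult_le_pos. nra. apply Rlt_le, Rinv_0_lt_compat; lra.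
  - unfold Rdiv. rewrite <- (Rmult_1_r (g * (g+1))) at 2. apply Rmult_le_compat_l. nra.
    rewrite <- Rinv_1. apply Rinv_le_contravar; lra.
Qed.

Fixpoint fpi (g : R) (n : nat) : R -> R :=
  match n with
  | O => fun _ => 1
  | S m => I1 (I1 (fun s => Wt g s * fpi g m s))
  end.

Definition dpi1 (g : R) (n : nat) : R -> R :=
  match n with
  | O => fun _ => 0
  | S m => I1 (fun s => Wt g s * fpi g m s)
  end.

Definition dpi2 (g : R) (n : nat) : R -> R :=
  match n with
  | O => fun _ => 0
  | S m => fun s => Wt g s * fpi g m s
  end.

Lemma fpi_props g n :
  (forall x, is_derive (fpi g n) x (dpi1 g n x)) /\ (forall x, is_derive (dpi1 g n) x (dpi2 g n x))
  /\ (forall x, continuous (dpi2 g n) x).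
Proof.
  induction n as [|n IH].
  - simpl. split; [|split]; intros x.
    + apply (is_derive_const 1).
    + apply (is_derive_const 0).
    + apply continuous_const.
  - destruct IH as [D1 [D2 C]].
    assert (Cn : forall x, continuous (fpi g n) x) by exact (cont_of_derive _ _ D1).
    assert (C2 : forall x, continuous (dpi2 g (S n)) x).
    { intros x. simpl. apply (continuous_mult (Wt g) (fpi g n)). apply Wt_cont. apply Cn. }
    assert (E2 : forall x, is_derive (dpi1 g (S n)) x (dpi2 g (S n) x)).
    { intros x. apply (I1_derive (dpi2 g (S n))). exact C2. }
    split; [|split]; auto.
    intros x. apply (I1_derive (dpi1 g (S n))). exact (cont_of_derive _ _ E2).
Qed.

Lemma fpi_0 g n : fpi g (S n) 0 = 0 /\ dpi1 g (S n) 0 = 0.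
Proof. simpl. split; apply I1_0. Qed.

Lemma fpi_nonneg g n x : 0 < g -> 0 <= fpi g n x.
Proof.
  intros Hg. revert x. induction n as [|n IH]; intros x.
  - simpl; lra.
  - destruct (fpi_props g (S n)) as [D1 [D2 _]].
    destruct (fpi_0 g n) as [Z0 Z1].
    refine (proj2 (proj2 (convex0 _ _ _ D1 D2 _ Z0 Z1 x))).
    intros t. simpl. apply Rmult_le_pos. apply Wt_bounds; auto. apply IH.
Qed.


Definition Pb (k : R) (n : nat) (x : R) := k ^ n * x ^ (2 * n) / INR (fact (2 * n)).
Definition Qb (k : R) (n : nat) (x : R) := k ^ (S n) * x ^ (S (2 * n)) / INR (fact (S (2 * n))).

Lemma pow_der a p x : is_derive (fun x => a * x ^ p) x (a * (INR p * x ^ pred p)).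
Proof. auto_derive. trivial. ring. Qed.



Lemma Pb_derive k n x : is_derive (Pb k (S n)) x (Qb k n x).
Proof.
  unfold Pb, Qb. replace (2 * S n)%nat with (S (S (2 * n))) by lia.
  set (m := (2 * n)%nat).
  assert (H := pow_der (k ^ (S n) / INR (fact (S (S m)))) (S (S m)) x).
  apply (is_derive_ext (K:=R_AbsRing) (V:=R_NormedModule) (fun x => k ^ S n / INR (fact (S (S m))) * x ^ S (S m))).
  { intros t. apply Rminus_diag_uniq. unfold Rdiv. ring. }
  replace (k ^ S n * x ^ S m / INR (fact (S m))) with
    (k ^ S n / INR (fact (S (S m))) * (INR (S (S m)) * x ^ Init.Nat.pred (S (S m)))); [exact H|].
  rewrite (fact_simpl (S m)). rewrite mult_INR.
  assert (0 < INR (fact (S m))) by apply INR_fact_lt_0.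
  assert (0 < INR (S (S m))) by (apply lt_0_INR; lia).
  simpl Init.Nat.pred. field. lra.
Qed.

Lemma Qb_derive k n x : is_derive (Qb k n) x (k * Pb k n x).
Proof.
  unfold Pb, Qb. set (m := (2 * n)%nat).
  assert (H := pow_der (k ^ (S n) / INR (fact (S m))) (S m) x).
  apply (is_derive_ext (K:=R_AbsRing) (V:=R_NormedModule) (fun x => k ^ S n / INR (fact (S m)) * x ^ S m)).
  { intros t. apply Rminus_diag_uniq. unfold Rdiv. ring. }
  replace (k * (k ^ n * x ^ m / INR (fact m))) with
    (k ^ S n / INR (fact (S m)) * (INR (S m) * x ^ Init.Nat.pred (S m))); [exact H|].
  rewrite (fact_simpl m). rewrite mult_INR.
  assert (0 < INR (fact m)) by apply INR_fact_lt_0.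
  assert (0 < INR (S m)) by (apply lt_0_INR; lia).
  simpl Init.Nat.pred. simpl pow. field. lra.
Qed.

Lemma Pb_nonneg k n x : 0 <= k -> 0 <= Pb k n x.
Proof.
  intros Hk. unfold Pb. apply Rmult_le_pos. apply Rmult_le_pos. apply pow_le; auto.
  rewrite pow_mult. apply pow_le. nra.
  apply Rlt_le, Rinv_0_lt_compat, INR_fact_lt_0.
Qed.

Lemma Pb_0 k n : Pb k (S n) 0 = 0 /\ Qb k n 0 = 0.
Proof.
  unfold Pb, Qb. rewrite !pow_i by lia. split; unfold Rdiv; ring.
Qed.

Lemma fpi_bound g n : 0 < g ->
  (forall x, Rabs (fpi g n x) <= Pb (g * (g+1)) n x) /\
  (forall x, Rabs (dpi1 g n x) <= match n with O => 0 | S m => Rabs (Qb (g * (g+1)) m x) end).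
Proof.
  intros Hg. set (k := g * (g + 1)). assert (Hk : 0 < k) by (unfold k; nra).
  induction n as [|n [IH _]].
  - split; intros x; simpl.
    + unfold Pb. simpl. rewrite Rabs_R1. lra.
    + rewrite Rabs_R0; lra.
  - destruct (fpi_props g (S n)) as [D1 [D2 _]].
    destruct (fpi_0 g n) as [Z0 Z1].
    destruct (Pb_0 k n) as [P0 Q0].
    assert (H2 : forall t, Rabs (dpi2 g (S n) t) <= k * Pb k n t).
    { intros t. simpl. rewrite Rabs_mult. destruct (Wt_bounds g t Hg).
      rewrite (Rabs_pos_eq (Wt g t)) by lra. apply Rmult_le_compat; auto. apply Rabs_pos. }
    assert (Hp := convex0 (fun t => Pb k (S n) t - fpi g (S n) t) (fun t => Qb k n t - dpi1 g (S n) t)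
       (fun t => k * Pb k n t - dpi2 g (S n) t)).
    assert (Hm := convex0 (fun t => Pb k (S n) t + fpi g (S n) t) (fun t => Qb k n t + dpi1 g (S n) t)
       (fun t => k * Pb k n t + dpi2 g (S n) t)).
    assert (A : forall x, (0 <= x -> 0 <= Qb k n x - dpi1 g (S n) x) /\ (x <= 0 -> Qb k n x - dpi1 g (S n) x <= 0) /\ 0 <= Pb k (S n) x - fpi g (S n) x).
    { apply Hp.
      - intros t. apply (is_derive_minus (Pb k (S n)) (fpi g (S n))). apply Pb_derive. apply D1.
      - intros t. apply (is_derive_minus (Qb k n) (dpi1 g (S n))). apply Qb_derive. apply D2.
      - intros t. specialize (H2 t). apply Rabs_le_between in H2. lra.
      - rewrite P0, Z0; ring.
      - rewrite Q0, Z1; ring. }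
    assert (B : forall x, (0 <= x -> 0 <= Qb k n x + dpi1 g (S n) x) /\ (x <= 0 -> Qb k n x + dpi1 g (S n) x <= 0) /\ 0 <= Pb k (S n) x + fpi g (S n) x).
    { apply Hm.
      - intros t. apply (is_derive_plus (Pb k (S n)) (fpi g (S n))). apply Pb_derive. apply D1.
      - intros t. apply (is_derive_plus (Qb k n) (dpi1 g (S n))). apply Qb_derive. apply D2.
      - intros t. specialize (H2 t). apply Rabs_le_between in H2. lra.
      - rewrite P0, Z0; ring.
      - rewrite Q0, Z1; ring. }
    split; intros x; destruct (A x) as [A1 [A2 A3]]; destruct (B x) as [B1 [B2 B3]].
    + apply Rabs_le. lra.
    + destruct (Rle_dec 0 x).
      * rewrite (Rabs_pos_eq (Qb k n x)) by (specialize (A1 r); specialize (B1 r); lra).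
        apply Rabs_le. specialize (A1 r); specialize (B1 r); lra.
      * rewrite (Rabs_left1 (Qb k n x)) by (assert (x <= 0) by lra; specialize (A2 H); specialize (B2 H); lra).
        assert (x <= 0) by lra. specialize (A2 H); specialize (B2 H).
        apply Rabs_le. lra.
Qed.


Definition Eb (c r : R) (n : nat) : R := / INR (fact n) * (c * r ^ 2) ^ n.

Lemma Eb_nonneg c r n : 0 <= c -> 0 <= Eb c r n.
Proof.
  intros. unfold Eb. apply Rmult_le_pos. apply Rlt_le, Rinv_0_lt_compat, INR_fact_lt_0.
  apply pow_le. nra.
Qed.

Lemma Eb_cv c r : Un_cv (fun N => sum_f_R0 (Eb c r) N) (exp (c * r ^ 2)).
Proof.
  unfold exp. destruct (exist_exp (c * r ^ 2)) as [l Hl]. simpl. exact Hl.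
Qed.

Lemma Eb_series c r : ex_series (Eb c r).
Proof.
  exists (exp (c * r ^ 2)). apply is_series_Reals. exact (Eb_cv c r).
Qed.

Lemma SP_derive (a b : nat -> R -> R) :
  (forall n y, is_derive (a n) y (b n y)) -> forall n y, is_derive (SP a n) y (SP b n y).
Proof.
  intros H n. induction n as [|n IH]; intros y.
  - unfold SP; simpl. apply H.
  - unfold SP; simpl. apply (is_derive_plus (fun y => sum_f_R0 (fun k => a k y) n) (a (S n))).
    apply IH. apply H.
Qed.

Lemma series_deriv (c : R) (a b : nat -> R -> R) : 0 <= c ->
  (forall n y, is_derive (a n) y (b n y)) ->
  (forall r n y, 1 <= r -> Rabs y < r -> Rabs (a n y) <= Eb c r n) ->
  (forall r n y, 1 <= r -> Rabs y < r -> Rabs (b n y) <= Eb c r n) ->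
  (forall y, ex_series (fun n => a n y)) /\
  forall x, is_derive (fun y => Series (fun n => a n y)) x (Series (fun n => b n x)).
Proof.
  intros Hc Hd Ha Hb.
  assert (Exa : forall y, ex_series (fun n => a n y)).
  { intros y. apply (ex_series_le (K:=R_AbsRing) (V:=R_CompleteNormedModule) _ (Eb c (Rabs y + 1))).
    intros n. apply (Ha (Rabs y + 1) n y). pose proof (Rabs_pos y); lra. lra. apply Eb_series. }
  split; [exact Exa|].
  intros x.
  assert (Hr : 0 < Rabs x + 1) by (pose proof (Rabs_pos x); lra).
  set (rp := mkposreal _ Hr).
  assert (CV : CVN_r b rp).
  { exists (Eb c (Rabs x + 1)). exists (exp (c * (Rabs x + 1) ^ 2)). split.
    - intros eps Heps. destruct (Eb_cv c (Rabs x + 1) eps Heps) as [N HN]. exists N.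
      intros n Hn. rewrite (sum_eq _ (Eb c (Rabs x + 1))). apply HN; auto.
      intros i _. apply Rabs_pos_eq, Eb_nonneg; auto.
    - intros n y Hy. unfold Boule in Hy. rewrite Rminus_0_r in Hy. apply Hb.
      pose proof (Rabs_pos x); simpl; lra. exact Hy. }
  assert (Hx : Rabs x < rp) by (simpl; lra).
  destruct (CVN_CVU_r b rp CV x Hx) as [e He].
  apply is_derive_Reals.
  apply (CVU_derivable (SP a) (SP b) (fun y => Series (fun n => a n y))
           (fun y => Series (fun n => b n y)) x e He).
  - intros y _. apply is_lim_seq_Reals.
    eapply is_lim_seq_ext. 2: { apply (Series_correct _ (Exa y)). }
    intros n. unfold SP. rewrite <- sum_n_Reals. reflexivity.
  - intros n y _. apply is_derive_Reals. apply SP_derive. exact Hd.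
  - unfold Boule. rewrite Rminus_diag, Rabs_R0. apply cond_pos.
Qed.


Lemma key k r m p q : 0 <= k -> 1 <= r -> (p <= 2 * m)%nat -> (fact m <= fact q)%nat ->
  k ^ m * r ^ p / INR (fact q) <= Eb k r m.
Proof.
  intros Hk Hr Hp Hq. unfold Eb. rewrite Rpow_mult_distr, <- pow_mult.
  assert (0 < INR (fact m)) by apply INR_fact_lt_0.
  assert (INR (fact m) <= INR (fact q)) by (apply le_INR; auto).
  assert (r ^ p <= r ^ (2 * m)) by (apply Rle_pow; auto).
  assert (0 <= k ^ m) by (apply pow_le; auto).
  assert (0 <= r ^ p) by (apply pow_le; lra).
  unfold Rdiv. rewrite (Rmult_comm (/ _)).
  apply Rmult_le_compat. apply Rmult_le_pos; auto. apply Rlt_le, Rinv_0_lt_compat; lra.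
  apply Rmult_le_compat_l; auto.
  apply Rinv_le_contravar; auto.
Qed.

Lemma pow_abs_le y r n : Rabs y <= r -> Rabs (y ^ n) <= r ^ n.
Proof. intros. rewrite <- RPow_abs. apply pow_incr. split; auto. apply Rabs_pos. Qed.

Lemma fpi_E g r n y : 0 < g -> 1 <= r -> Rabs y < r ->
  Rabs (fpi g n y) <= Eb (g * (g + 1)) r n /\
  Rabs (dpi1 g n y) <= Eb (g * (g + 1)) r n /\
  Rabs (dpi2 g n y) <= Eb (g * (g + 1)) r n.
Proof.
  intros Hg Hr Hy. set (k := g * (g + 1)). assert (Hk : 0 < k) by (unfold k; nra).
  assert (PB : forall n, Pb k n y <= k ^ n * r ^ (2 * n) / INR (fact (2 * n))).
  { intros m. unfold Pb, Rdiv. apply Rmult_le_compat_r. apply Rlt_le, Rinv_0_lt_compat, INR_fact_lt_0.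
    apply Rmult_le_compat_l. apply pow_le; lra.
    apply Rle_trans with (Rabs (y ^ (2 * m))). apply Rle_abs. apply pow_abs_le; lra. }
  destruct (fpi_bound g n Hg) as [B1 B2]. fold k in B1, B2.
  split; [|split].
  - eapply Rle_trans. apply B1. eapply Rle_trans. apply PB. apply key; [lra|lra|lia|apply fact_le; lia].
  - specialize (B2 y). destruct n as [|n]; simpl in B2.
    + eapply Rle_trans. apply B2. apply Eb_nonneg; lra.
    + eapply Rle_trans. apply B2. unfold Qb. rewrite Rabs_div, Rabs_mult.
      2: { apply not_0_INR, fact_neq_0. }
      rewrite (Rabs_pos_eq (k ^ S n)) by (apply pow_le; lra).
      rewrite (Rabs_pos_eq (INR _)) by apply pos_INR.
      apply Rle_trans with (k ^ S n * r ^ S (2 * n) / INR (fact (S (2 * n)))).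
      * unfold Rdiv. apply Rmult_le_compat_r. apply Rlt_le, Rinv_0_lt_compat, INR_fact_lt_0.
        apply Rmult_le_compat_l. apply pow_le; lra. apply pow_abs_le; lra.
      * apply key; try lra. lia. apply fact_le. lia.
  - destruct n as [|n].
    + simpl. rewrite Rabs_R0. apply Eb_nonneg; lra.
    + simpl dpi2. rewrite Rabs_mult. destruct (Wt_bounds g y Hg).
      rewrite (Rabs_pos_eq (Wt g y)) by lra.
      destruct (fpi_bound g n Hg) as [C1 _]. fold k in C1.
      apply Rle_trans with (k * (k ^ n * r ^ (2 * n) / INR (fact (2 * n)))).
      * apply Rmult_le_compat; auto. apply Rabs_pos. eapply Rle_trans. apply C1. apply PB.
      * replace (k * (k ^ n * r ^ (2 * n) / INR (fact (2 * n)))) with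
          (k ^ S n * r ^ (2 * n) / INR (fact (2 * n))) by (simpl; field; apply not_0_INR, fact_neq_0).
        apply key; try lra. lia. destruct n. simpl; lia. apply fact_le. lia.
Qed.

Definition psi g y := Series (fun n => fpi g n y).
Definition psi1 g y := Series (fun n => dpi1 g n y).

Lemma psi_props g : 0 < g ->
  (forall x, is_derive (psi g) x (psi1 g x)) /\
  (forall x, is_derive (psi1 g) x (Wt g x * psi g x)) /\
  psi g 0 = 1 /\ psi1 g 0 = 0 /\ (forall x, 1 <= psi g x).
Proof.
  intros Hg. set (k := g * (g + 1)). assert (Hk : 0 <= k) by (unfold k; nra).
  destruct (series_deriv k (fpi g) (dpi1 g) Hk) as [Ex0 D0].
  { intros n y. apply fpi_props. }
  { intros r n y Hr Hy. apply (fpi_E g r n y Hg Hr Hy). }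
  { intros r n y Hr Hy. apply (fpi_E g r n y Hg Hr Hy). }
  destruct (series_deriv k (dpi1 g) (dpi2 g) Hk) as [Ex1 D1].
  { intros n y. apply fpi_props. }
  { intros r n y Hr Hy. apply (fpi_E g r n y Hg Hr Hy). }
  { intros r n y Hr Hy. apply (fpi_E g r n y Hg Hr Hy). }
  split; [|split; [|split; [|split]]].
  - exact D0.
  - intros x. unfold psi.
    replace (Wt g x * Series (fun n => fpi g n x)) with (Series (fun n => dpi2 g n x)).
    apply D1.
    rewrite Series_incr_1_aux by reflexivity. simpl. rewrite Series_scal_l. reflexivity.
  - unfold psi. rewrite Series_incr_1 by apply Ex0. simpl fpi at 1.
    rewrite (Series_ext _ (fun n => 0 * 0)). rewrite Series_scal_l. ring.
    intros n. rewrite (proj1 (fpi_0 g n)). ring.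
  - unfold psi1. rewrite (Series_ext _ (fun n => 0 * 0)). rewrite Series_scal_l. ring.
    intros n. destruct n. simpl; ring. rewrite (proj2 (fpi_0 g n)). ring.
  - intros x. unfold psi. rewrite Series_incr_1 by apply Ex0. simpl fpi at 1.
    assert (0 <= Series (fun k0 => fpi g (S k0) x)).
    { assert (Z : Series (fun _ : nat => 0) = 0).
      { rewrite (Series_ext _ (fun n => 0 * 0)) by (intros; ring). rewrite Series_scal_l. ring. }
      rewrite <- Z. apply Series_le.
      intros n. split. lra. apply fpi_nonneg; auto.
      apply (ex_series_incr_1 (fun n => fpi g n x)). apply Ex0. }
    lra.
Qed.


Lemma der_mult (f g : R -> R) df dg x : is_derive f x df -> is_derive g x dg ->
  is_derive (fun t => f t * g t) x (df * g x + f x * dg).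
Proof. intros A B. exact (is_derive_mult f g x df dg A B Rmult_comm). Qed.

Definition ok (f : R -> R) (n : nat) := forall j x, (j <= n)%nat -> ex_derive_n f j x.

Lemma Dn_S f i x : Derive_n f (S i) x = Derive_n (Derive f) i x.
Proof.
  change (Derive_n f (S i) x = Derive_n (Derive_n f 1) i x).
  rewrite (Derive_n_comp f i 1%nat). rewrite Nat.add_1_r. reflexivity.
Qed.

Lemma exn_S f i x : ex_derive_n f (S (S i)) x <-> ex_derive_n (Derive f) (S i) x.
Proof.
  simpl. split; intros H.
  - eapply ex_derive_ext. 2: exact H. intros t. rewrite <- Dn_S. reflexivity.
  - eapply ex_derive_ext. 2: exact H. intros t. rewrite <- Dn_S. reflexivity.
Qed.

Lemma ok_step f n : (forall x, ex_derive f x) -> ok (Derive f) n -> ok f (S n).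
Proof.
  intros E H j x Hj. destruct j as [|[|i]].
  - exact I.
  - simpl. eapply ex_derive_ext. 2: apply E. intros; reflexivity.
  - apply (proj2 (exn_S f i x)). apply H. lia.
Qed.

Lemma ok_Derive f n : ok f (S n) -> ok (Derive f) n.
Proof.
  intros H j x Hj. destruct j as [|i].
  - exact I.
  - apply (proj1 (exn_S f i x)). apply H. lia.
Qed.

Lemma ok_weak f n : ok f (S n) -> ok f n.
Proof. intros H j x Hj. apply H. lia. Qed.

Lemma ok_ex f n x : ok f (S n) -> ex_derive f x.
Proof.
  intros H. assert (A := H 1%nat x ltac:(lia)). simpl in A.
  eapply ex_derive_ext. 2: exact A. intros; reflexivity.
Qed.

Lemma ok_ext f g n : (forall t, f t = g t) -> ok f n -> ok g n.
Proof. intros E H j x Hj. eapply ex_derive_n_ext. exact E. apply H; auto. Qed.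

Lemma ok_plus f g n : ok f n -> ok g n -> ok (fun t => f t + g t) n.
Proof.
  intros A B j x Hj. apply ex_derive_n_plus.
  - apply filter_forall. intros y k Hk. apply A. lia.
  - apply filter_forall. intros y k Hk. apply B. lia.
Qed.

Lemma ok_scal c f n : ok f n -> ok (fun t => c * f t) n.
Proof. intros A j x Hj. apply ex_derive_n_scal_l. apply A; auto. Qed.

Lemma ok_const n : forall c, ok (fun _ => c) n.
Proof.
  induction n as [|n IH]; intros c.
  - intros j x Hj. replace j with 0%nat by lia. exact I.
  - apply ok_step. intros; apply ex_derive_const.
    apply (ok_ext (fun _ => 0)). intros t. symmetry. apply Derive_const. apply IH.
Qed.

Lemma ok_id n : ok (fun t => t) n.
Proof.
  destruct n as [|n].
  - intros j x Hj. replace j with 0%nat by lia. exact I.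
  - apply ok_step. intros; apply ex_derive_id.
    apply (ok_ext (fun _ => 1)). intros t. symmetry. apply Derive_id. apply ok_const.
Qed.

Lemma ok_mult n : forall f g, ok f n -> ok g n -> ok (fun t => f t * g t) n.
Proof.
  induction n as [|n IH]; intros f g A B.
  - intros j x Hj. replace j with 0%nat by lia. exact I.
  - apply ok_step.
    + intros x. apply ex_derive_mult; eapply ok_ex; eauto.
    + apply (ok_ext (fun t => Derive f t * g t + f t * Derive g t)).
      { intros t. symmetry. apply Derive_mult; eapply ok_ex; eauto. }
      apply ok_plus; apply IH; auto using ok_Derive, ok_weak.
Qed.

Definition winv (v : R) := / (1 + v ^ 2).

Lemma ok_winv n : ok winv n.
Proof.
  induction n as [|n IH].
  - intros j x Hj. replace j with 0%nat by lia. exact I.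
  - apply ok_step.
    + intros x. unfold winv. auto_derive. nra.
    + apply (ok_ext (fun t => -2 * (t * winv t * winv t))).
      { intros t. symmetry. apply is_derive_unique. unfold winv. auto_derive. nra.
        field. nra. }
      apply ok_scal. apply ok_mult. apply ok_mult. apply ok_id. auto. auto.
Qed.

Lemma ok_Wt g n : ok (Wt g) n.
Proof.
  apply (ok_ext (fun t => (g * (g + 1)) * winv t)). intros t. unfold Wt, winv. field. nra.
  apply ok_scal, ok_winv.
Qed.

Lemma ok_sol g (p p1 : R -> R) :
  (forall x, is_derive p x (p1 x)) -> (forall x, is_derive p1 x (Wt g x * p x)) ->
  forall n, ok p n.
Proof.
  intros D1 D2.
  assert (H : forall n, ok p n -> ok p (S n)).
  { intros n Hn. apply ok_step. intros x; eexists; apply D1.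
    apply (ok_ext p1). intros t. symmetry. apply is_derive_unique. apply D1.
    destruct n as [|m].
    - intros j x Hj. replace j with 0%nat by lia. exact I.
    - apply ok_step. intros x; eexists; apply D2.
      apply (ok_ext (fun t => Wt g t * p t)). intros t. symmetry. apply is_derive_unique. apply D2.
      apply ok_mult. apply ok_Wt. apply ok_weak; auto. }
  induction n as [|n IH].
  - intros j x Hj. replace j with 0%nat by lia. exact I.
  - apply H, IH.
Qed.


Lemma der_plus (f g : R -> R) df dg x : is_derive f x df -> is_derive g x dg ->
  is_derive (fun t => f t + g t) x (df + dg).
Proof. intros A B. exact (is_derive_plus f g x df dg A B). Qed.

Lemma uniq0 g (d d1 d2 : R -> R) : 0 < g ->
  (forall x, is_derive d x (d1 x)) -> (forall x, is_derive d1 x (d2 x)) ->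
  (forall x, d2 x = Wt g x * d x) -> d 0 = 0 -> d1 0 = 0 -> forall x, d x = 0.
Proof.
  intros Hg D1 D2 HW Z0 Z1.
  set (c := 1 + g * (g + 1)).
  set (E := fun x => d x * d x + d1 x * d1 x).
  set (E1 := fun x => 2 * d x * d1 x * (1 + Wt g x)).
  assert (DE : forall x, is_derive E x (E1 x)).
  { intros x.
    assert (H : is_derive E x ((d1 x * d x + d x * d1 x) + (d2 x * d1 x + d1 x * d2 x))).
    { apply (der_plus (fun t => d t * d t) (fun t => d1 t * d1 t)); apply der_mult; auto. }
    replace (E1 x) with ((d1 x * d x + d x * d1 x) + (d2 x * d1 x + d1 x * d2 x)). exact H.
    unfold E1. rewrite HW. ring. }
  assert (BE : forall x, Rabs (E1 x) <= c * E x).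
  { intros x. unfold E1, E, c. destruct (Wt_bounds g x Hg) as [W0 W1].
    rewrite Rabs_mult. rewrite (Rabs_pos_eq (1 + Wt g x)) by lra.
    assert (Rabs (2 * d x * d1 x) <= d x * d x + d1 x * d1 x).
    { pose proof (pow2_ge_0 (d x - d1 x)); pose proof (pow2_ge_0 (d x + d1 x)). apply Rabs_le. split; nra. }
    apply Rle_trans with ((d x * d x + d1 x * d1 x) * (1 + Wt g x)).
    apply Rmult_le_compat_r; lra. nra. }
  assert (E0 : E 0 = 0) by (unfold E; rewrite Z0, Z1; ring).
  assert (Epos : forall x, 0 <= E x) by (intros; unfold E; nra).
  intros x.
  assert (Ex : E x = 0).
  { destruct (Rle_lt_dec 0 x).
    - assert (- (E 0 * exp (- c * 0)) <= - (E x * exp (- c * x))).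
      { apply (mono (fun t => - (E t * exp (- c * t)))
                    (fun t => - (E1 t * exp (- c * t) + E t * (- c * exp (- c * t))))).
        lra.
        - intros t _. apply (is_derive_opp (fun t => E t * exp (- c * t))).
          apply (der_mult E (fun t => exp (- c * t))). apply DE. auto_derive. trivial. ring.
        - intros t _. specialize (BE t). apply Rabs_le_between in BE.
          assert (0 < exp (- c * t)) by apply exp_pos. nra. }
      assert (0 < exp (- c * x)) by apply exp_pos.
      rewrite E0 in H. specialize (Epos x). nra.
    - assert (E x * exp (c * x) <= E 0 * exp (c * 0)).
      { apply (mono (fun t => E t * exp (c * t))
                    (fun t => E1 t * exp (c * t) + E t * (c * exp (c * t)))).
        lra.
        - intros t _. apply (der_mult E (fun t => exp (c * t))). apply DE. auto_derive. trivial. ring.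
        - intros t _. specialize (BE t). apply Rabs_le_between in BE.
          assert (0 < exp (c * t)) by apply exp_pos. nra. }
      assert (0 < exp (c * x)) by apply exp_pos.
      rewrite E0 in H. specialize (Epos x). nra. }
  unfold E in Ex. nra.
Qed.


Lemma Rpower_pos x y : 0 < Rpower x y.
Proof. unfold Rpower. apply exp_pos. Qed.

Lemma Rpower_1_base y : Rpower 1 y = 1.
Proof. unfold Rpower. rewrite ln_1, Rmult_0_r. apply exp_0. Qed.

Lemma Rpower_derive (u : R -> R) du b x : 0 < u x -> is_derive u x du ->
  is_derive (fun t => Rpower (u t) b) x (b * Rpower (u x) (b - 1) * du).
Proof.
  intros Hu Hd.
  assert (H : is_derive (fun y => Rpower y b) (u x) (b * Rpower (u x) (b - 1))).
  { apply is_derive_Reals. apply derivable_pt_lim_power. exact Hu. }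
  assert (H2 := is_derive_comp (fun y => Rpower y b) u x _ _ H Hd).
  replace (b * Rpower (u x) (b - 1) * du) with (scal du (b * Rpower (u x) (b - 1))).
  exact H2. unfold scal; simpl; unfold mult; simpl. ring.
Qed.

Lemma cmp (p p1 p2 q q1 q2 : R -> R) :
  (forall x, is_derive p x (p1 x)) -> (forall x, is_derive p1 x (p2 x)) ->
  (forall x, is_derive q x (q1 x)) -> (forall x, is_derive q1 x (q2 x)) ->
  (forall x, 0 < q x) -> (forall x, 0 <= p2 x * q x - p x * q2 x) ->
  p 0 = q 0 -> p1 0 * q 0 - p 0 * q1 0 = 0 -> forall x, 0 <= x -> q x <= p x.
Proof.
  intros Dp Dp1 Dq Dq1 Qpos S P0 W0 x Hx.
  set (w := fun t => p1 t * q t - p t * q1 t).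
  assert (Dw : forall t, is_derive w t (p2 t * q t - p t * q2 t)).
  { intros t. unfold w.
    assert (H := is_derive_minus (fun t => p1 t * q t) (fun t => p t * q1 t) t _ _
                 (der_mult _ _ _ _ t (Dp1 t) (Dq t)) (der_mult _ _ _ _ t (Dp t) (Dq1 t))).
    replace (p2 t * q t - p t * q2 t) with
      (minus (p2 t * q t + p1 t * q1 t) (p1 t * q1 t + p t * q2 t)). exact H.
    unfold minus, plus, opp; simpl. ring. }
  assert (Wp : forall t, 0 <= t -> 0 <= w t).
  { intros t Ht. replace 0 with (w 0) by (unfold w; lra). apply (mono w (fun t => p2 t * q t - p t * q2 t) 0 t Ht).
    intros; apply Dw. intros; apply S. }
  assert (R1 : p 0 / q 0 <= p x / q x).
  { apply (mono (fun t => p t / q t) (fun t => (p1 t * q t - p t * q1 t) / q t ^ 2) 0 x Hx).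
    - intros t _. apply is_derive_div. apply Dp. apply Dq. specialize (Qpos t). lra.
    - intros t Ht. unfold Rdiv. apply Rmult_le_pos. apply Wp; lra.
      apply Rlt_le, Rinv_0_lt_compat. specialize (Qpos t). apply pow_lt. lra. }
  rewrite P0 in R1. unfold Rdiv in R1. rewrite Rinv_r in R1 by (specialize (Qpos 0); lra).
  specialize (Qpos x). apply Rmult_le_compat_r with (r := q x) in R1; [|lra].
  rewrite Rmult_1_l, Rmult_assoc, Rinv_l, Rmult_1_r in R1 by lra. exact R1.
Qed.

Definition zeta g m x := Rpower (1 + m * x ^ 2) ((g + 1) / 2).
Definition zeta1 g m x := let a := (g + 1) / 2 in a * Rpower (1 + m * x ^ 2) (a - 1) * (2 * m * x).
Definition zeta2 g m x := let a := (g + 1) / 2 in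
  a * ((a - 1) * Rpower (1 + m * x ^ 2) (a - 2) * (2 * m * x)) * (2 * m * x)
  + a * Rpower (1 + m * x ^ 2) (a - 1) * (2 * m).

Lemma zeta_derive g m x : 0 <= m ->
  is_derive (zeta g m) x (zeta1 g m x) /\ is_derive (zeta1 g m) x (zeta2 g m x).
Proof.
  intros Hm. assert (Hu : 0 < 1 + m * x ^ 2) by nra.
  assert (Du : is_derive (fun t => 1 + m * t ^ 2) x (2 * m * x)).
  { auto_derive. trivial. ring. }
  split.
  - unfold zeta, zeta1. apply (Rpower_derive (fun t => 1 + m * t ^ 2)); auto.
  - unfold zeta1, zeta2.
    set (a := (g + 1) / 2).
    assert (H1 := Rpower_derive (fun t => 1 + m * t ^ 2) _ (a - 1) x Hu Du).
    assert (H2 : is_derive (fun t => a * Rpower (1 + m * t ^ 2) (a - 1)) x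
                   (a * ((a - 1) * Rpower (1 + m * x ^ 2) (a - 1 - 1) * (2 * m * x)))).
    { apply (is_derive_scal (fun t => Rpower (1 + m * t ^ 2) (a - 1))). exact H1. }
    assert (H3 : is_derive (fun t => 2 * m * t) x (2 * m)).
    { auto_derive. trivial. ring. }
    assert (H := der_mult _ _ _ _ x H2 H3).
    replace (a - 1 - 1) with (a - 2) in H by ring. exact H.
Qed.

Lemma Rpower_S X b : 0 < X -> Rpower X (b + 1) = Rpower X b * X.
Proof. intros. rewrite Rpower_plus, Rpower_1; auto. Qed.

Lemma zeta_ident g m x : 0 <= m ->
  Wt g x * zeta g m x - zeta2 g m x =
  Rpower (1 + m * x ^ 2) ((g + 1) / 2 - 2) *
  ((g * (g + 1) - (g + 1) * m) + m * x ^ 2 * (2 * g * (g + 1) - (g + 1) - g * (g + 1) * m)) / (1 + x ^ 2).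
Proof.
  intros Hm. assert (Hu : 0 < 1 + m * x ^ 2) by nra.
  unfold zeta, zeta2, Wt. cbv zeta. set (X := 1 + m * x ^ 2). set (a := (g + 1) / 2).
  assert (E1 : Rpower X (a - 1) = Rpower X (a - 2) * X).
  { rewrite <- Rpower_S by (unfold X; nra). f_equal. ring. }
  assert (E2 : Rpower X a = Rpower X (a - 2) * X * X).
  { rewrite <- Rpower_S by (unfold X; nra). rewrite <- Rpower_S by (unfold X; nra). f_equal. ring. }
  rewrite E1, E2. set (R0 := Rpower X (a - 2)).
  unfold X, a. field. nra.
Qed.


Lemma zeta_0 g m : zeta g m 0 = 1 /\ zeta1 g m 0 = 0.
Proof.
  unfold zeta, zeta1. cbv zeta. replace (1 + m * 0 ^ 2) with 1 by ring.
  rewrite Rpower_1_base. split; ring.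
Qed.

Lemma psi_lower g : 1 / 2 < g -> forall x, 0 <= x -> zeta g ((2 * g - 1) / g) x <= psi g x.
Proof.
  intros Hg. assert (Hg0 : 0 < g) by lra.
  set (m := (2 * g - 1) / g). assert (Hm : 0 < m) by (unfold m; apply Rdiv_lt_0_compat; lra).
  destruct (psi_props g Hg0) as [D1 [D2 [P0 [P10 P1]]]].
  destruct (zeta_0 g m) as [Z0 Z1].
  apply (cmp (psi g) (psi1 g) (fun x => Wt g x * psi g x) (zeta g m) (zeta1 g m) (zeta2 g m)); auto.
  - intros x. apply zeta_derive; lra.
  - intros x. apply zeta_derive; lra.
  - intros x. apply Rpower_pos.
  - intros x. replace (Wt g x * psi g x * zeta g m x - psi g x * zeta2 g m x)
      with (psi g x * (Wt g x * zeta g m x - zeta2 g m x)) by ring.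
    rewrite zeta_ident by lra.
    replace (g * (g + 1) - (g + 1) * m + m * x ^ 2 * (2 * g * (g + 1) - (g + 1) - g * (g + 1) * m))
      with ((g + 1) * (g - 1) ^ 2 / g) by (unfold m; field; lra).
    apply Rmult_le_pos. specialize (P1 x); lra.
    unfold Rdiv. apply Rmult_le_pos. apply Rmult_le_pos. apply Rlt_le, Rpower_pos.
    apply Rmult_le_pos. apply Rmult_le_pos. lra. apply pow2_ge_0. apply Rlt_le, Rinv_0_lt_compat; lra.
    apply Rlt_le, Rinv_0_lt_compat. nra.
  - rewrite P0, Z0. reflexivity.
  - rewrite P10, Z1. ring.
Qed.

Lemma psi_upper g : 1 / 2 < g -> forall x, 0 <= x -> psi g x <= zeta g g x.
Proof.
  intros Hg. assert (Hg0 : 0 < g) by lra.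
  destruct (psi_props g Hg0) as [D1 [D2 [P0 [P10 P1]]]].
  destruct (zeta_0 g g) as [Z0 Z1].
  apply (cmp (zeta g g) (zeta1 g g) (zeta2 g g) (psi g) (psi1 g) (fun x => Wt g x * psi g x)); auto.
  - intros x. apply zeta_derive; lra.
  - intros x. apply zeta_derive; lra.
  - intros x. specialize (P1 x); lra.
  - intros x. replace (zeta2 g g x * psi g x - zeta g g x * (Wt g x * psi g x))
      with (- psi g x * (Wt g x * zeta g g x - zeta2 g g x)) by ring.
    rewrite zeta_ident by lra.
    replace (g * (g + 1) - (g + 1) * g + g * x ^ 2 * (2 * g * (g + 1) - (g + 1) - g * (g + 1) * g))
      with (- (g * (g + 1) * (g - 1) ^ 2 * x ^ 2)) by ring.
    assert (0 <= g * (g + 1) * (g - 1) ^ 2 * x ^ 2).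
    { apply Rmult_le_pos. apply Rmult_le_pos. nra. apply pow2_ge_0. apply pow2_ge_0. }
    assert (0 < Rpower (1 + g * x ^ 2) ((g + 1) / 2 - 2)) by apply Rpower_pos.
    assert (0 < / (1 + x ^ 2)) by (apply Rinv_0_lt_compat; nra).
    specialize (P1 x). unfold Rdiv in *.
    set (A := g * (g + 1) * (g - 1) ^ 2 * x ^ 2) in *.
    set (B := Rpower (1 + g * x ^ 2) ((g + 1) * / 2 - 2)) in *.
    set (C := / (1 + x ^ 2)) in *.
    replace (- psi g x * (B * - A * C)) with (psi g x * (B * A * C)) by ring.
    apply Rmult_le_pos. lra. apply Rmult_le_pos. apply Rmult_le_pos; lra. lra.
  - rewrite P0, Z0. reflexivity.
  - rewrite P10, Z1. ring.
Qed.


Lemma rp_der b x : 0 < x -> is_derive (fun t => Rpower t b) x (b * Rpower x (b - 1)).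
Proof.
  intros Hx. assert (H := Rpower_derive (fun t => t) 1 b x Hx (is_derive_id x)).
  rewrite Rmult_1_r in H. exact H.
Qed.

Lemma rp_add x b c : 0 < x -> Rpower x (b + c) = Rpower x b * Rpower x c.
Proof. intros. apply Rpower_plus. Qed.

Lemma rp_nat x n : 0 < x -> Rpower x (INR n) = x ^ n.
Proof. intros. apply Rpower_pow; auto. Qed.

Lemma rp_sq x b : 0 < x -> Rpower (x ^ 2) b = Rpower x (2 * b).
Proof.
  intros Hx. rewrite <- (rp_nat x 2) by auto. rewrite Rpower_mult. f_equal; try (simpl; ring).
Qed.

Lemma psi_pw g x : 1 / 2 < g -> 1 <= x ->
  Rpower ((2 * g - 1) / g) ((g + 1) / 2) * Rpower x (g + 1) <= psi g x <=
  Rpower (1 + g) ((g + 1) / 2) * Rpower x (g + 1).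
Proof.
  intros Hg Hx. assert (Hm : 0 < (2 * g - 1) / g) by (apply Rdiv_lt_0_compat; lra).
  assert (Ex : Rpower x (g + 1) = Rpower (x ^ 2) ((g + 1) / 2)).
  { rewrite rp_sq by lra. f_equal. field. }
  rewrite Ex. split.
  - eapply Rle_trans. 2: apply psi_lower; lra. unfold zeta.
    rewrite Rpower_mult_distr by (try apply pow_lt; lra).
    apply Rle_Rpower_l. lra. split. apply Rmult_lt_0_compat. auto. apply pow_lt; lra.
    assert (0 <= (2 * g - 1) / g * x ^ 2) by (apply Rmult_le_pos; [lra| apply pow2_ge_0]). lra.
  - eapply Rle_trans. apply psi_upper; lra. unfold zeta.
    rewrite Rpower_mult_distr by (try apply pow_lt; lra).
    apply Rle_Rpower_l. lra. split. assert (0 <= g * x ^ 2) by (apply Rmult_le_pos; [lra| apply pow2_ge_0]). lra.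
    assert (1 <= x ^ 2) by nra. nra.
Qed.

Lemma der_minus (f g : R -> R) df dg x : is_derive f x df -> is_derive g x dg ->
  is_derive (fun t => f t - g t) x (df - dg).
Proof. intros A B. exact (is_derive_minus f g x df dg A B). Qed.

Lemma rp_g x g : 0 < x -> Rpower x g = Rpower x (g - 1) * x.
Proof. intros. rewrite <- Rpower_S by auto. f_equal. ring. Qed.

Lemma rp_2 x : 0 < x -> Rpower x 2 = x ^ 2.
Proof. intros Hx. exact (rp_nat x 2 Hx). Qed.

Lemma rp_g1 x g : 0 < x -> Rpower x (g + 1) = Rpower x (g - 1) * x ^ 2.
Proof. intros. rewrite <- rp_2 by auto. rewrite <- rp_add by auto. f_equal. ring. Qed.

Definition Gf g x := psi1 g x * Rpower x (g + 1) - (g + 1) * Rpower x g * psi g x.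

Lemma Gf_der g x : 0 < g -> 0 < x ->
  is_derive (Gf g) x (- (g * (g + 1)) * psi g x * Rpower x (g - 1) / (1 + x ^ 2)).
Proof.
  intros Hg Hx. destruct (psi_props g Hg) as [D1 [D2 _]].
  assert (A := der_mult (psi1 g) (fun t => Rpower t (g + 1)) _ _ x (D2 x) (rp_der (g + 1) x Hx)).
  assert (B0 : is_derive (fun t => (g + 1) * Rpower t g) x ((g + 1) * (g * Rpower x (g - 1)))).
  { apply (is_derive_scal (fun t => Rpower t g)). apply rp_der; auto. }
  assert (B := der_mult (fun t => (g + 1) * Rpower t g) (psi g) _ _ x B0 (D1 x)).
  assert (C := der_minus (fun t => psi1 g t * Rpower t (g + 1)) (fun t => (g + 1) * Rpower t g * psi g t) _ _ x A B).
  unfold Gf.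
  replace (- (g * (g + 1)) * psi g x * Rpower x (g - 1) / (1 + x ^ 2)) with
    (Wt g x * psi g x * Rpower x (g + 1) +
     psi1 g x * ((g + 1) * Rpower x (g + 1 - 1)) -
     ((g + 1) * (g * Rpower x (g - 1)) * psi g x +
      (g + 1) * Rpower x g * psi1 g x)). exact C.
  replace (g + 1 - 1) with g by ring.
  rewrite (rp_g1 x g Hx), (rp_g x g Hx). unfold Wt. field. nra.
Qed.

Lemma mono_dec (f df : R -> R) x y : x <= y ->
  (forall t, x <= t <= y -> is_derive f t (df t)) ->
  (forall t, x <= t <= y -> df t <= 0) -> f y <= f x.
Proof.
  intros Hxy Hd Hn.
  assert (- f x <= - f y).
  { apply (mono (fun t => - f t) (fun t => - df t)); auto.
    intros t Ht. apply (is_derive_opp f). auto.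
    intros t Ht. specialize (Hn t Ht). lra. }
  lra.
Qed.

Lemma rp_ge1 x b : 1 <= x -> 0 <= b -> 1 <= Rpower x b.
Proof.
  intros. rewrite <- (Rpower_O x) by lra. apply Rle_Rpower; auto.
Qed.

Lemma G_bound g : 1 / 2 < g -> exists K0, 0 <= K0 /\
  forall x, 1 <= x -> Rabs (Gf g x) <= K0 * Rpower x (2 * g - 1).
Proof.
  intros Hg. assert (Hg0 : 0 < g) by lra.
  set (Cu := Rpower (1 + g) ((g + 1) / 2)).
  set (k := g * (g + 1)).
  set (c1 := k * Cu / (2 * g - 1)).
  assert (HCu : 0 < Cu) by apply Rpower_pos.
  assert (Hc1 : 0 <= c1) by (unfold c1, k; apply Rlt_le, Rdiv_lt_0_compat; [apply Rmult_lt_0_compat; nra | lra]).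
  destruct (psi_props g Hg0) as [_ [_ [_ [_ P1]]]].
  exists (Rabs (Gf g 1) + c1). split. pose proof (Rabs_pos (Gf g 1)); lra.
  intros x Hx.
  assert (Up : Gf g x <= Gf g 1).
  { apply (mono_dec (Gf g) (fun t => - (g * (g + 1)) * psi g t * Rpower t (g - 1) / (1 + t ^ 2))); auto.
    intros t Ht. apply Gf_der; lra.
    intros t Ht. assert (0 < Rpower t (g - 1)) by apply Rpower_pos.
    specialize (P1 t). unfold Rdiv. assert (0 < / (1 + t ^ 2)) by (apply Rinv_0_lt_compat; nra).
    assert (0 <= g * (g + 1) * psi g t * Rpower t (g - 1) * / (1 + t ^ 2)).
    { repeat apply Rmult_le_pos; lra. }
    lra. }
  assert (Lo : Gf g 1 + c1 * Rpower 1 (2 * g - 1) <= Gf g x + c1 * Rpower x (2 * g - 1)).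
  { apply (mono (fun t => Gf g t + c1 * Rpower t (2 * g - 1))
      (fun t => - (g * (g + 1)) * psi g t * Rpower t (g - 1) / (1 + t ^ 2) +
                c1 * ((2 * g - 1) * Rpower t (2 * g - 1 - 1)))); auto.
    - intros t Ht. apply der_plus. apply Gf_der; lra.
      apply (is_derive_scal (fun t => Rpower t (2 * g - 1))). apply rp_der; lra.
    - intros t Ht. assert (Ht0 : 0 < t) by lra.
      assert (HP : 0 < Rpower t (g - 1)) by apply Rpower_pos.
      replace (2 * g - 1 - 1) with ((g - 1) + (g - 1)) by ring.
      rewrite rp_add by lra.
      destruct (psi_pw g t Hg (proj1 Ht)) as [_ U]. fold Cu in U. rewrite rp_g1 in U by lra.
      set (P := Rpower t (g - 1)) in *.
      replace (c1 * ((2 * g - 1) * (P * P))) with (k * Cu * (P * P)) by (unfold c1; field; lra).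
      assert (psi g t * P <= Cu * (P * P) * t ^ 2) by nra.
      assert (0 < 1 + t ^ 2) by nra.
      assert (psi g t * P / (1 + t ^ 2) <= Cu * (P * P)).
      { apply Rmult_le_reg_r with (1 + t ^ 2). lra. unfold Rdiv. rewrite Rmult_assoc, Rinv_l by lra.
        assert (0 <= Cu * (P * P)) by (apply Rmult_le_pos; nra). nra. }
      assert (Hk : 0 < k) by (unfold k; nra).
      replace (- (g * (g + 1)) * psi g t * P / (1 + t ^ 2)) with (- k * (psi g t * P / (1 + t ^ 2)))
        by (unfold k; field; lra).
      nra. }
  rewrite Rpower_1_base in Lo.
  assert (HX : 1 <= Rpower x (2 * g - 1)) by (apply rp_ge1; lra).
  assert (AX : Rabs (Gf g 1) * 1 <= Rabs (Gf g 1) * Rpower x (2 * g - 1))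
    by (apply Rmult_le_compat_l; [apply Rabs_pos|lra]).
  assert (CX : c1 * 1 <= c1 * Rpower x (2 * g - 1)) by (apply Rmult_le_compat_l; lra).
  apply Rabs_le. split.
  - assert (- Rabs (Gf g 1) <= Gf g 1) by (pose proof (Rle_abs (- Gf g 1)) as HH; rewrite Rabs_Ropp in HH; lra).
    lra.
  - assert (Gf g 1 <= Rabs (Gf g 1)) by apply Rle_abs.
    assert (0 <= Rabs (Gf g 1)) by apply Rabs_pos.
    lra.
Qed.


Definition uf g x := psi g x / Rpower x (g + 1).

Lemma uf_der g x : 0 < g -> 0 < x -> is_derive (uf g) x (Gf g x / Rpower x (g + 1) ^ 2).
Proof.
  intros Hg Hx. destruct (psi_props g Hg) as [D1 _].
  assert (H := is_derive_div (psi g) (fun t => Rpower t (g + 1)) x _ _ (D1 x) (rp_der (g + 1) x Hx)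
                 (Rgt_not_eq _ _ (Rpower_pos x (g + 1)))).
  unfold uf. replace (Gf g x / Rpower x (g + 1) ^ 2) with
    ((psi1 g x * Rpower x (g + 1) - psi g x * ((g + 1) * Rpower x (g + 1 - 1))) / Rpower x (g + 1) ^ 2).
  exact H. unfold Gf. replace (g + 1 - 1) with g by ring. field.
  apply Rgt_not_eq, Rpower_pos.
Qed.

Lemma uf_der_bound g K0 x : 0 < g -> 1 <= x -> 0 <= K0 ->
  Rabs (Gf g x) <= K0 * Rpower x (2 * g - 1) ->
  Rabs (Gf g x / Rpower x (g + 1) ^ 2) <= K0 / x ^ 3.
Proof.
  intros Hg Hx HK HG. assert (Hx0 : 0 < x) by lra.
  rewrite rp_g1 in * by lra.
  replace (2 * g - 1) with ((g - 1) + (g - 1) + 1) in HG by ring.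
  rewrite !rp_add, Rpower_1 in HG by lra.
  set (P := Rpower x (g - 1)) in *. assert (HP : 0 < P) by apply Rpower_pos.
  rewrite Rabs_div by (apply Rgt_not_eq; apply pow_lt; apply Rmult_lt_0_compat; [lra| apply pow_lt; lra]).
  rewrite (Rabs_pos_eq ((P * x ^ 2) ^ 2)) by (apply pow_le; nra).
  assert (0 < (P * x ^ 2) ^ 2) by (apply pow_lt; apply Rmult_lt_0_compat; [lra| apply pow_lt; lra]).
  apply Rmult_le_reg_r with ((P * x ^ 2) ^ 2). auto.
  unfold Rdiv. rewrite Rmult_assoc, Rinv_l by lra. rewrite Rmult_1_r.
  replace (K0 * / x ^ 3 * (P * x ^ 2) ^ 2) with (K0 * (P * P * x)) by (field; lra).
  exact HG.
Qed.

Lemma asym g : 1 / 2 < g -> exists c K, 0 < c /\ 0 <= K /\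
  forall x, 1 <= x -> Rabs (uf g x - c) <= K / x ^ 2.
Proof.
  intros Hg. assert (Hg0 : 0 < g) by lra.
  destruct (G_bound g Hg) as [K0 [HK0 HG]].
  set (Lm := Rpower ((2 * g - 1) / g) ((g + 1) / 2)).
  assert (HLm : 0 < Lm) by apply Rpower_pos.
  assert (uL : forall x, 1 <= x -> Lm <= uf g x).
  { intros x Hx. destruct (psi_pw g x Hg Hx) as [L _]. fold Lm in L. unfold uf.
    assert (0 < Rpower x (g + 1)) by apply Rpower_pos.
    apply Rmult_le_reg_r with (Rpower x (g + 1)). auto.
    unfold Rdiv. rewrite Rmult_assoc, Rinv_l, Rmult_1_r by lra. exact L. }
  set (low := fun x => uf g x - K0 / (2 * x ^ 2)).
  set (up := fun x => uf g x + K0 / (2 * x ^ 2)).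
  assert (Dk : forall x, 1 <= x -> is_derive (fun t => K0 / (2 * t ^ 2)) x (- (K0 / x ^ 3))).
  { intros x Hx. auto_derive. nra.
    field. lra. }
  assert (UB : forall x, 1 <= x -> Rabs (Gf g x / Rpower x (g + 1) ^ 2) <= K0 / x ^ 3).
  { intros x Hx. apply uf_der_bound; auto. }
  assert (lowM : forall x y, 1 <= x -> x <= y -> low x <= low y).
  { intros x y Hx Hxy. apply (mono low (fun t => Gf g t / Rpower t (g + 1) ^ 2 - - (K0 / t ^ 3))); auto.
    intros t Ht. apply der_minus. apply uf_der; lra. apply Dk; lra.
    intros t Ht. specialize (UB t ltac:(lra)). apply Rabs_le_between in UB. lra. }
  assert (upM : forall x y, 1 <= x -> x <= y -> up y <= up x).
  { intros x y Hx Hxy. apply (mono_dec up (fun t => Gf g t / Rpower t (g + 1) ^ 2 + - (K0 / t ^ 3))); auto.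
    intros t Ht. apply der_plus. apply uf_der; lra. apply Dk; lra.
    intros t Ht. specialize (UB t ltac:(lra)). apply Rabs_le_between in UB. lra. }
  assert (lu : forall x, 1 <= x -> low x <= up x).
  { intros x Hx. unfold low, up. assert (0 <= K0 / (2 * x ^ 2)).
    { apply Rmult_le_pos; auto. apply Rlt_le, Rinv_0_lt_compat. assert (0 < x ^ 2) by (apply pow_lt; lra). lra. }
    lra. }
  set (E := fun y => exists x, 1 <= x /\ y = low x).
  assert (Eb : bound E).
  { exists (up 1). intros y [x [Hx ->]]. eapply Rle_trans. apply lu; auto. apply upM; lra. }
  assert (Ene : exists y, E y) by (exists (low 1); exists 1; split; [lra|reflexivity]).
  destruct (completeness E Eb Ene) as [c [Hc1 Hc2]].
  assert (C1 : forall x, 1 <= x -> low x <= c) by (intros x Hx; apply Hc1; exists x; auto).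
  assert (C2 : forall x, 1 <= x -> c <= up x).
  { intros x Hx. apply Hc2. intros y [z [Hz ->]]. destruct (Rle_dec z x).
    - eapply Rle_trans. apply lowM. exact Hz. exact r. apply lu; auto.
    - eapply Rle_trans. apply lu; auto. apply upM; lra. }
  exists c, (K0 / 2). split; [|split].
  - set (X := 1 + K0 / Lm).
    assert (HX : 1 <= X) by (unfold X; assert (0 <= K0 / Lm) by (apply Rmult_le_pos; [lra| apply Rlt_le, Rinv_0_lt_compat; lra]); lra).
    specialize (C1 X HX). unfold low in C1. specialize (uL X HX).
    assert (K0 / (2 * X ^ 2) <= Lm / 2).
    { assert (X <= X ^ 2) by nra. assert (K0 <= Lm * X).
      { unfold X. rewrite Rmult_plus_distr_l, Rmult_1_r. replace (Lm * (K0 / Lm)) with K0 by (field; lra). lra. }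
      apply Rmult_le_reg_r with (2 * X ^ 2). nra. unfold Rdiv. rewrite Rmult_assoc, Rinv_l by nra. nra. }
    lra.
  - lra.
  - intros x Hx. specialize (C1 x Hx). specialize (C2 x Hx). unfold low, up in *.
    replace (K0 / 2 / x ^ 2) with (K0 / (2 * x ^ 2)) by (field; lra).
    apply Rabs_le. lra.
Qed.


Lemma der_neg (f : R -> R) df x : is_derive f (- x) df -> is_derive (fun t => f (- t)) x (- df).
Proof.
  intros H.
  assert (Hn : is_derive (fun t : R => - t) x (-1)) by (auto_derive; [trivial| ring]).
  assert (H2 := is_derive_comp f (fun t => - t) x df (-1) H Hn).
  replace (- df) with (scal (-1) df) by (unfold scal; simpl; unfold mult; simpl; ring).
  exact H2.
Qed.

Lemma psi_even g : 0 < g -> forall v, psi g (- v) = psi g v.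
Proof.
  intros Hg. destruct (psi_props g Hg) as [D1 [D2 [P0 [P10 _]]]].
  intros v.
  assert (H := uniq0 g (fun x => psi g (- x) - psi g x) (fun x => - psi1 g (- x) - psi1 g x)
     (fun x => - - (Wt g (- x) * psi g (- x)) - Wt g x * psi g x) Hg).
  enough (psi g (- v) - psi g v = 0) by lra.
  apply H.
  - intros x. apply der_minus. apply der_neg. apply D1. apply D1.
  - intros x. apply der_minus. apply (der_neg (fun t => - psi1 g t)).
    apply (is_derive_opp (psi1 g)). apply D2. apply D2.
  - intros x. unfold Wt. replace ((- x) ^ 2) with (x ^ 2) by ring. ring.
  - rewrite Ropp_0. ring.
  - rewrite Ropp_0, P10. ring.
Qed.

Lemma psi_abs g v : 0 < g -> psi g (Rabs v) = psi g v.
Proof.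
  intros Hg. destruct (Rle_dec 0 v).
  - rewrite Rabs_pos_eq; auto.
  - rewrite Rabs_left by lra. apply psi_even; auto.
Qed.

Theorem lemma2p2 (gamma : R) (hgamma : 1 / 2 < gamma) :
  exists psi : R -> R,
    smooth psi /\ (forall v, 0 < psi v) /\ cauchy_sol gamma psi /\
    (forall phi : R -> R, smooth phi -> (forall v, 0 < phi v) ->
        cauchy_sol gamma phi -> forall v, phi v = psi v) /\
    (forall v, psi (- v) = psi v /\ 0 < psi v) /\
    (exists c v0 : R, 0 < c /\ 0 < v0 /\
       exists Rm : R -> R, remainder_ok gamma psi c v0 Rm /\
         (forall Rm' : R -> R, remainder_ok gamma psi c v0 Rm' ->
            forall v, v0 <= Rabs v -> Rm' v = Rm v)).
Proof.
  assert (Hg : 0 < gamma) by lra.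
  destruct (psi_props gamma Hg) as [D1 [D2 [P0 [P10 Pge1]]]].
  assert (Dn1 : forall y, Derive (psi gamma) y = psi1 gamma y).
  { intros y. apply is_derive_unique. apply D1. }
  exists (psi gamma).
  split; [|split; [|split; [|split; [|split]]]].
  - intros n x. apply (ok_sol gamma (psi gamma) (psi1 gamma) D1 D2 n n x). lia.
  - intros v. specialize (Pge1 v). lra.
  - split; [|split].
    + intros v. unfold L0.
      change (Derive_n (psi gamma) 2 v) with (Derive (Derive (psi gamma)) v).
      rewrite (Derive_ext _ (psi1 gamma) v Dn1).
      rewrite (is_derive_unique _ _ _ (D2 v)). ring.
    + exact P0.
    + rewrite Dn1. exact P10.
  - intros phi Sm Pos [L [I0 I1]] v.
    assert (E1 : forall x, ex_derive phi x) by (intros x; exact (Sm 1%nat x)).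
    assert (E2 : forall x, ex_derive (Derive phi) x) by (intros x; exact (Sm 2%nat x)).
    assert (DD : forall x, Derive (Derive phi) x = Wt gamma x * phi x).
    { intros x. specialize (L x). unfold L0 in L.
      change (Derive_n phi 2 x) with (Derive (Derive phi) x) in L. lra. }
    assert (H := uniq0 gamma (fun x => phi x - psi gamma x) (fun x => Derive phi x - psi1 gamma x)
       (fun x => Derive (Derive phi) x - Wt gamma x * psi gamma x) Hg).
    enough (phi v - psi gamma v = 0) by lra.
    apply H.
    + intros x. apply der_minus. apply Derive_correct, E1. apply D1.
    + intros x. apply der_minus. apply Derive_correct, E2. apply D2.
    + intros x. rewrite DD. ring.
    + rewrite I0, P0. ring.
    + rewrite I1, P10. ring.
  - intros v. split. apply psi_even; auto. specialize (Pge1 v). lra.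
  - destruct (asym gamma hgamma) as [c [K [Hc [HK HA]]]].
    exists c, 1. split; [auto|split; [lra|]].
    set (Rm := fun v => psi gamma v / (c * Rpower (Rabs v) (gamma + 1)) - 1).
    assert (Req : forall v, 1 <= Rabs v -> Rm v = (uf gamma (Rabs v) - c) / c).
    { intros v Hv. unfold Rm, uf. rewrite psi_abs by auto. field.
      repeat split; try lra; apply Rgt_not_eq, Rpower_pos. }
    assert (Rb : forall v, 1 <= Rabs v -> Rabs (Rm v) <= K / c * / (Rabs v ^ 2)).
    { intros v Hv. rewrite Req by auto. rewrite Rabs_div by lra. rewrite (Rabs_pos_eq c) by lra.
      specialize (HA (Rabs v) Hv).
      apply Rmult_le_reg_r with c. lra. unfold Rdiv. rewrite Rmult_assoc, Rinv_l, Rmult_1_r by lra.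
      replace (K * / c * / Rabs v ^ 2 * c) with (K / Rabs v ^ 2) by (field; repeat split; try lra; try (apply pow_nonzero); lra).
      exact HA. }
    assert (Rok : remainder_ok gamma (psi gamma) c 1 Rm).
    { split; [|split].
      - exists (K / c). intros v Hv. eapply Rle_trans. apply Rb; auto.
        rewrite <- (Rmult_1_r (K / c)) at 2. apply Rmult_le_compat_l.
        apply Rmult_le_pos; [lra| apply Rlt_le, Rinv_0_lt_compat; lra].
        rewrite <- Rinv_1. apply Rinv_le_contravar. lra. nra.
      - exists (K / c), 1. exact Rb.
      - intros v Hv. unfold Rm. field. repeat split; try lra; apply Rgt_not_eq, Rpower_pos. }
    exists Rm. split; [exact Rok|].
    intros Rm' [_ [_ Eq']] v Hv. specialize (Eq' v Hv).
    unfold Rm. rewrite Eq'. field. repeat split; try lra; apply Rgt_not_eq, Rpower_pos.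
Qed.
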